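(* Let $A$ be a pca and $f,g:A\rightharpoonup A$ partial functions. Then the pcas $A[f][g]$ and $A[g][f]$ are isomorphic.
   Context: A partial combinatory algebra (pca) is a set $A$ with a partial binary application (associating to the left) admitting $K,S\in A$ with $Kab=a$, $Sab{\downarrow}$, $Sabc\simeq ac(bc)$. Each pca has fixed Booleans $\top,\bot$, pairing $p$ with projections $p_0,p_1$ ($p_0(pab)=a$, $p_1(pab)=b$), and a coding $[u_0,\dots,u_{n-1}]$ of finite sequences with concatenation $\ast$. For a pca $A$ and partial $f:A\rightharpoonup A$, the pca $A[f]$ has underlying set $A$; for $a,b\in A$, an $f$-dialogue between $a$ and $b$ is a code $u=[u_0,\dots,u_{n-1}]$ such that for every $i<n$ there is $v_i$ with $a\cdot([b]\ast[u_0,\dots,u_{i-1}])=p\bot v_i$ and $f(v_i)$ defined and equal to $u_i$; then $a\cdot^f b=c$ iff there is an $f$-dialogue $u$ between $a$ and $b$ with $a\cdot([b]\ast u)=p\top c$. Since $A[f]$ has underlying set $A$, $g$ is also a partial endofunction of $A[f]$, so $A[f][g]$ makes sense. An applicative morphism $\gamma:A\to B$ is a function from $A$ to nonempty subsets of $B$ with some $r\in B$ such that $aa'{\downarrow}$, $b\in\gamma(a)$, $b'\in\gamma(a')$ imply $rbb'{\downarrow}$ and $rbb'\in\gamma(aa')$; composition is $(\delta\gamma)(a)=\bigcup_{b\in\gamma(a)}\delta(b)$, identities are $a\mapsto\{a\}$. Pcas $A,B$ are isomorphic if there are applicative morphisms $\gamma:A\to B$, $\delta:B\to A$ with $\delta\gamma$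 and $\gamma\delta$ equal to the identity morphisms. *)

(* Defs.v *)
From Stdlib Require Import List.
Import ListNotations.

(* Partial application is represented as a relation [ap a b c] : "a·b ↓ and a·b = c";
   partial functions f : A ⇀ A are represented as [A -> option A]. *)
Definition appl (A : Type) := A -> A -> A -> Prop.

Definition functional_ap {A} (ap : appl A) : Prop :=
  forall a b c c', ap a b c -> ap a b c' -> c = c'.

Record pca_str (A : Type) := PcaStr {
  ap : appl A;
  pK : A; pS : A;
  pT : A; pF : A;
  pp : A; pp0 : A; pp1 : A;
  ap_functional : functional_ap ap;
  K_ax : forall a b, exists k, ap pK a k /\ ap k b a;
  S_def : forall a b, exists s1 s, ap pS a s1 /\ ap s1 b s;
  S_ax : forall a b s1 s c d, ap pS a s1 -> ap s1 b s ->
           (ap s c d <-> exists x y, ap a c x /\ ap b c y /\ ap x y d);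
  T_ax : forall a b, exists t, ap pT a t /\ ap t b a;
  F_ax : forall a b, exists t, ap pF a t /\ ap t b b;
  p_def : forall a b, exists q r, ap pp a q /\ ap q b r;
  p0_ax : forall a b q r, ap pp a q -> ap q b r -> ap pp0 r a;
  p1_ax : forall a b q r, ap pp a q -> ap q b r -> ap pp1 r b
}.
Arguments ap {A}. Arguments pK {A}. Arguments pS {A}. Arguments pT {A}.
Arguments pF {A}. Arguments pp {A}. Arguments pp0 {A}. Arguments pp1 {A}.

Definition pairv {A} (P : pca_str A) (a b z : A) : Prop :=
  exists q, ap P (pp P) a q /\ ap P q b z.

(* Coding of finite sequences in P:
   [] := p ⊤ ⊤,   [u_0,...,u_{n-1}] := p ⊥ (p u_0 [u_1,...,u_{n-1}]).
   [is_code P us z] : z = [us]. Concatenation of codes is concatenation of lists. *)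
Inductive is_code {A} (P : pca_str A) : list A -> A -> Prop :=
| code_nil : forall z, pairv P (pT P) (pT P) z -> is_code P [] z
| code_cons : forall u us z w y,
    is_code P us z -> pairv P u z w -> pairv P (pF P) w y -> is_code P (u :: us) y.

(* f-dialogue between a and b: the code u = [us] with us = [u_0,...,u_{n-1}] such that
   for each i < n there is v_i with a·([b] * [u_0,...,u_{i-1}]) = p ⊥ v_i and f(v_i) = u_i. *)
Definition dialogue {A} (P : pca_str A) (f : A -> option A) (a b : A) (us : list A) : Prop :=
  forall i, i < length us ->
    exists v x w, is_code P (b :: firstn i us) x /\ pairv P (pF P) v w /\
                  ap P a x w /\ f v = Some (nth i us b).

(* Application of A[f]: a ·^f b = c iff there is an f-dialogue u between a and b
   with a·([b] * u) = p ⊤ c. *)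
Definition rel_ap {A} (P : pca_str A) (f : A -> option A) : appl A :=
  fun a b c => exists us, dialogue P f a b us /\
    exists x w, is_code P (b :: us) x /\ pairv P (pT P) c w /\ ap P a x w.

(* Applicative morphisms; [gam a b] means b ∈ γ(a). *)
Definition applicative {A B} (apA : appl A) (apB : appl B) (gam : A -> B -> Prop) : Prop :=
  (forall a, exists b, gam a b) /\
  exists r, forall a a' c b b', apA a a' c -> gam a b -> gam a' b' ->
    exists rb rbb', apB r b rb /\ apB rb b' rbb' /\ gam c rbb'.

Definition comp_is_id {A B} (gam : A -> B -> Prop) (del : B -> A -> Prop) : Prop :=
  forall a x, (exists b, gam a b /\ del b x) <-> x = a.

Definition pca_iso {A B} (apA : appl A) (apB : appl B) : Prop :=
  exists (gam : A -> B -> Prop) (del : B -> A -> Prop),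
    applicative apA apB gam /\ applicative apB apA del /\
    comp_is_id gam del /\ comp_is_id del gam.

(* Main.v *)
Require Import Defs.
From Stdlib Require Import List Arith Lia PeanoNat.
Import ListNotations.

Section Basics.
Context {A : Type} (Q : pca_str A).

Lemma apf a b c c' : ap Q a b c -> ap Q a b c' -> c = c'.
Proof. apply ap_functional. Qed.

Lemma pairv_ex a b : exists z, pairv Q a b z.
Proof. destruct (p_def _ Q a b) as [q [r [H1 H2]]]. exists r, q; auto. Qed.

Lemma pairv_fun a b z z' : pairv Q a b z -> pairv Q a b z' -> z = z'.
Proof. intros [q [H1 H2]] [q' [H1' H2']].
  pose proof (apf _ _ _ _ H1 H1'); subst. eapply apf; eauto. Qed.

Lemma pairv_p0 a b z : pairv Q a b z -> ap Q (pp0 Q) z a.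
Proof. intros [q [H1 H2]]. eapply p0_ax; eauto. Qed.
Lemma pairv_p1 a b z : pairv Q a b z -> ap Q (pp1 Q) z b.
Proof. intros [q [H1 H2]]. eapply p1_ax; eauto. Qed.

Lemma code_ex L : exists z, is_code Q L z.
Proof. induction L as [|u L [z Hz]].
  - destruct (pairv_ex (pT Q) (pT Q)) as [z Hz]. exists z; constructor; auto.
  - destruct (pairv_ex u z) as [w Hw]. destruct (pairv_ex (pF Q) w) as [y Hy].
    exists y; econstructor; eauto. Qed.

Lemma code_fun L z z' : is_code Q L z -> is_code Q L z' -> z = z'.
Proof. intros H; revert z'; induction H; intros z' H'; inversion H'; subst.
  - eapply pairv_fun; eauto.
  - match goal with Hc : is_code Q us ?z2 |- _ => pose proof (IHis_code _ Hc); subst end.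
    match goal with H1 : pairv Q u ?a ?b, H2 : pairv Q u ?a ?c |- _ =>
      pose proof (pairv_fun _ _ _ _ H1 H2); subst end.
    eapply pairv_fun; eauto. Qed.

Lemma code_cons_inv u L y : is_code Q (u::L) y ->
  exists z w, is_code Q L z /\ pairv Q u z w /\ pairv Q (pF Q) w y.
Proof. intros H; inversion H; subst; eauto 6. Qed.

Lemma T_sel a b : exists t, ap Q (pT Q) a t /\ ap Q t b a.
Proof. apply T_ax. Qed.
Lemma F_sel a b : exists t, ap Q (pF Q) a t /\ ap Q t b b.
Proof. apply F_ax. Qed.

End Basics.

Inductive tm (A:Type) := V (n:nat) | C (a:A) | Ap (t u : tm A).
Arguments V {A}. Arguments C {A}. Arguments Ap {A}.

Definition upd {A} (r : nat -> A) x a := fun y => if Nat.eqb y x then a else r y.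

Fixpoint occ {A} (x:nat) (t : tm A) : bool := match t with
 | V y => Nat.eqb y x | C _ => false | Ap t u => occ x t || occ x u end.

Section Terms.
Context {A : Type} (Q : pca_str A).

Inductive ev (r : nat -> A) : tm A -> A -> Prop :=
| evV : forall n, ev r (V n) (r n)
| evC : forall a, ev r (C a) a
| evAp : forall t u x y c, ev r t x -> ev r u y -> ap Q x y c -> ev r (Ap t u) c.

Lemma ev_fun r t c c' : ev r t c -> ev r t c' -> c = c'.
Proof. intros H; revert c'; induction H; intros c' H'; inversion H'; subst; auto.
  match goal with Ht : ev r t ?x2, Hu : ev r u ?y2 |- _ =>
    pose proof (IHev1 _ Ht); pose proof (IHev2 _ Hu) end; subst. eapply apf; eauto. Qed.

Lemma ev_agree r r' t c : (forall n, occ n t = true -> r n = r' n) -> ev r t c -> ev r' t c.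
Proof. intros Hr H; induction H.
  - rewrite Hr. constructor. simpl. apply Nat.eqb_refl.
  - constructor.
  - econstructor; [apply IHev1|apply IHev2|eauto]; intros n Hn; apply Hr; simpl; rewrite Hn;
    auto using Bool.orb_true_r.
Qed.

Lemma ev_upd_nf r x a t c : occ x t = false -> ev r t c -> ev (upd r x a) t c.
Proof. intros Ho; apply ev_agree. intros n Hn. unfold upd.
  destruct (Nat.eqb n x) eqn:E; auto. apply Nat.eqb_eq in E; subst. congruence. Qed.

Definition tI : tm A := Ap (Ap (C (pS Q)) (C (pK Q))) (C (pK Q)).
Fixpoint lam (x:nat) (t: tm A) : tm A := match t with
 | V y => if Nat.eqb y x then tI else Ap (C (pK Q)) (V y)
 | C a => Ap (C (pK Q)) (C a)
 | Ap t u => Ap (Ap (C (pS Q)) (lam x t)) (lam x u) end.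

Lemma K_val (b : A) : exists k, ap Q (pK Q) b k /\ forall a c, ap Q k a c <-> c = b.
Proof. destruct (K_ax _ Q b b) as [k [H1 H2]]. exists k; split; auto.
  intros a c; split; intro H.
  - destruct (K_ax _ Q b a) as [k' [H1' H2']]. pose proof (apf Q _ _ _ _ H1 H1'); subst.
    eapply apf; eauto.
  - subst. destruct (K_ax _ Q b a) as [k' [H1' H2']]. pose proof (apf Q _ _ _ _ H1 H1'); subst. auto.
Qed.

Lemma lam_spec t r x : exists v, ev r (lam x t) v /\ forall a c, ap Q v a c <-> ev (upd r x a) t c.
Proof.
  induction t as [y|b|t IHt u IHu]; simpl.
  - destruct (Nat.eqb y x) eqn:E.
    + destruct (S_def _ Q (pK Q) (pK Q)) as [s1 [s [H1 H2]]]. exists s. split.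
      * econstructor; [econstructor; [constructor|constructor|eauto]|constructor|eauto].
      * intros a c. rewrite (S_ax _ Q _ _ _ _ a c H1 H2).
        assert (Hy : upd r x a y = a) by (unfold upd; rewrite E; auto).
        split.
        -- intros [x1 [y1 [Ha [Hb Hc]]]].
           destruct (K_val a) as [k [Hk Hk']]. pose proof (apf Q _ _ _ _ Ha Hk); subst.
           apply Hk' in Hc; subst.
           assert (Hv : ev (upd r x a) (V y) (upd r x a y)) by constructor. rewrite Hy in Hv; exact Hv.
        -- intros He. inversion He; subst. rewrite Hy.
           destruct (K_val a) as [k [Hk Hk']].
           destruct (K_ax _ Q a k) as [k2 [Hk2 _]].
           exists k, k2. repeat split; auto. apply Hk'; auto.
    + destruct (K_val (r y)) as [k [Hk Hk']]. exists k; split.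
      * econstructor; [constructor|constructor|auto].
      * intros a c. rewrite Hk'. assert (Hy : upd r x a y = r y) by (unfold upd; rewrite E; auto).
        split; intro H.
        -- subst. assert (Hv : ev (upd r x a) (V y) (upd r x a y)) by constructor. rewrite Hy in Hv; exact Hv.
        -- inversion H; subst. auto.
  - destruct (K_val b) as [k [Hk Hk']]. exists k; split.
    + econstructor; [constructor|constructor|auto].
    + intros a c. rewrite Hk'. split; intro H; [subst; constructor| inversion H; auto].
  - destruct IHt as [v1 [H1 H1']]. destruct IHu as [v2 [H2 H2']].
    destruct (S_def _ Q v1 v2) as [s1 [s [Hs1 Hs2]]]. exists s. split.
    + econstructor; [econstructor; [constructor|eauto|eauto]|eauto|eauto].
    + intros a c. rewrite (S_ax _ Q _ _ _ _ a c Hs1 Hs2). split.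
      * intros [x1 [y1 [Ha [Hb Hc]]]]. econstructor; [apply H1'|apply H2'|]; eauto.
      * intro H. inversion H; subst. exists x0, y. repeat split; auto.
        apply H1'; auto. apply H2'; auto.
Qed.


Lemma ev_Ap_inv r t u c : ev r (Ap t u) c -> exists x y, ev r t x /\ ev r u y /\ ap Q x y c.
Proof. intro H; inversion H; subst; eauto. Qed.
Lemma ev_V_inv r n c : ev r (V n) c -> c = r n.
Proof. intro H; inversion H; auto. Qed.
Lemma ev_C_inv r a c : ev r (C a) c -> c = a.
Proof. intro H; inversion H; auto. Qed.

Definition r0 : nat -> A := fun _ => pK Q.

Lemma clos1 body : exists F, forall a m, ap Q F a m <-> ev (upd r0 0 a) body m.
Proof. destruct (lam_spec body r0 0) as [v [_ Hv]]. eauto. Qed.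

Lemma clos2 body : exists F, forall a, exists w, ap Q F a w /\
  forall b m, ap Q w b m <-> ev (upd (upd r0 0 a) 1 b) body m.
Proof. destruct (lam_spec (lam 1 body) r0 0) as [v [_ Hv]]. exists v. intros a.
  destruct (lam_spec body (upd r0 0 a) 1) as [w [Hw Hw']]. exists w. split; auto.
  apply Hv; auto. Qed.

Lemma clos3 body : exists F, forall a, exists w, ap Q F a w /\
  forall b, exists w2, ap Q w b w2 /\
  forall c m, ap Q w2 c m <-> ev (upd (upd (upd r0 0 a) 1 b) 2 c) body m.
Proof. destruct (lam_spec (lam 1 (lam 2 body)) r0 0) as [v [_ Hv]]. exists v. intros a.
  destruct (lam_spec (lam 2 body) (upd r0 0 a) 1) as [w [Hw Hw']]. exists w. split.
  apply Hv; auto. intros b.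
  destruct (lam_spec body (upd (upd r0 0 a) 1 b) 2) as [w2 [Hw2 Hw2']]. exists w2. split; auto.
  apply Hw'; auto. Qed.

Lemma fix_spec : exists th, forall h, exists v, ap Q th h v /\
  forall a c, ap Q v a c <-> exists w, ap Q h v w /\ ap Q w a c.
Proof.
  set (B := Ap (Ap (V 1) (Ap (Ap (V 0) (V 0)) (V 1))) (V 2) : tm A).
  destruct (lam_spec (lam 1 (lam 2 B)) r0 0) as [vW [HW HW']].
  destruct (lam_spec (lam 2 B) (upd r0 0 vW) 1) as [vW2 [H2 H2']].
  assert (HWW : ap Q vW vW vW2) by (apply HW'; auto).
  exists vW2. intros h.
  destruct (lam_spec B (upd (upd r0 0 vW) 1 h) 2) as [v3 [H3 H3']].
  assert (Hv3 : ap Q vW2 h v3) by (apply H2'; auto).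
  exists v3. split; auto. intros a c. rewrite H3'. unfold B. split.
  - intros Hc. apply ev_Ap_inv in Hc as [x1 [y1 [Hx1 [Hy1 Hc]]]].
    apply ev_V_inv in Hy1. cbn in Hy1. subst.
    apply ev_Ap_inv in Hx1 as [x2 [y2 [Hx2 [Hy2 Hx1]]]].
    apply ev_V_inv in Hx2. cbn in Hx2. subst.
    apply ev_Ap_inv in Hy2 as [x3 [y3 [Hx3 [Hy3 Hy2]]]].
    apply ev_V_inv in Hy3. cbn in Hy3. subst.
    apply ev_Ap_inv in Hx3 as [x4 [y4 [Hx4 [Hy4 Hx3]]]].
    apply ev_V_inv in Hx4. apply ev_V_inv in Hy4. cbn in Hx4, Hy4. subst.
    pose proof (apf Q _ _ _ _ Hx3 HWW); subst.
    pose proof (apf Q _ _ _ _ Hy2 Hv3); subst. eauto.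
  - intros [w [Hw Hwa]].
    econstructor; [econstructor; [constructor| |]|constructor|]; cbn; eauto.
    econstructor; [econstructor; [constructor|constructor|]|constructor|]; cbn; eauto.
Qed.

Lemma rec2 body : exists F, forall a, exists w, ap Q F a w /\
  forall b m, ap Q w b m <-> ev (upd (upd (upd r0 0 F) 1 a) 2 b) body m.
Proof.
  destruct fix_spec as [th Hth].
  destruct (lam_spec (lam 1 (lam 2 body)) r0 0) as [vH [_ HH]].
  destruct (Hth vH) as [F [HF HF']]. exists F. intros a.
  destruct (lam_spec (lam 2 body) (upd r0 0 F) 1) as [w1 [Hw1 Hw1']].
  destruct (lam_spec body (upd (upd r0 0 F) 1 a) 2) as [w2 [Hw2 Hw2']].
  exists w2. split; auto.
  apply HF'. exists w1. split. apply HH; auto. apply Hw1'; auto.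
Qed.

End Terms.

Section Derived.
Context {A : Type} (Q : pca_str A).

Definition pairT (t u : tm A) := Ap (Ap (C (pp Q)) t) u.
Definition p0T (t : tm A) := Ap (C (pp0 Q)) t.
Definition p1T (t : tm A) := Ap (C (pp1 Q)) t.
Definition tif (b t1 t2 : tm A) := Ap (Ap (Ap b (lam Q 99 t1)) (lam Q 99 t2)) (C (pK Q)).
Definition tlet x (t body : tm A) := Ap (lam Q x body) t.

Lemma ev_pair r t u a b : ev Q r t a -> ev Q r u b -> exists w, ev Q r (pairT t u) w /\ pairv Q a b w.
Proof. intros Ht Hu. destruct (p_def _ Q a b) as [q [w [H1 H2]]]. exists w; split.
  econstructor; [econstructor; [constructor|eauto|eauto]|eauto|eauto]. exists q; auto. Qed.

Lemma ev_pair' r t u a b w : ev Q r t a -> ev Q r u b -> pairv Q a b w -> ev Q r (pairT t u) w.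
Proof. intros Ht Hu [q [H1 H2]].
  econstructor; [econstructor; [constructor|eauto|eauto]|eauto|eauto]. Qed.

Lemma ev_p0 r t z a b : ev Q r t z -> pairv Q a b z -> ev Q r (p0T t) a.
Proof. intros Ht Hz. econstructor; [constructor|eauto|]. eapply pairv_p0; eauto. Qed.
Lemma ev_p1 r t z a b : ev Q r t z -> pairv Q a b z -> ev Q r (p1T t) b.
Proof. intros Ht Hz. econstructor; [constructor|eauto|]. eapply pairv_p1; eauto. Qed.

Lemma ev_ifT r b t1 t2 c : occ 99 t1 = false -> ev Q r b (pT Q) -> ev Q r t1 c -> ev Q r (tif b t1 t2) c.
Proof. intros Ho Hb H1. unfold tif.
  destruct (lam_spec Q t1 r 99) as [v1 [Hv1 Hv1']]. destruct (lam_spec Q t2 r 99) as [v2 [Hv2 Hv2']].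
  destruct (T_sel Q v1 v2) as [t [Ht1 Ht2]].
  econstructor; [econstructor; [econstructor; [eauto|eauto|eauto]|eauto|eauto]|constructor|].
  apply Hv1'. apply ev_upd_nf; auto. Qed.

Lemma ev_ifF r b t1 t2 c : occ 99 t2 = false -> ev Q r b (pF Q) -> ev Q r t2 c -> ev Q r (tif b t1 t2) c.
Proof. intros Ho Hb H1. unfold tif.
  destruct (lam_spec Q t1 r 99) as [v1 [Hv1 Hv1']]. destruct (lam_spec Q t2 r 99) as [v2 [Hv2 Hv2']].
  destruct (F_sel Q v1 v2) as [t [Ht1 Ht2]].
  econstructor; [econstructor; [econstructor; [eauto|eauto|eauto]|eauto|eauto]|constructor|].
  apply Hv2'. apply ev_upd_nf; auto. Qed.

Lemma ev_let r x t body a c : ev Q r t a -> ev Q (upd r x a) body c -> ev Q r (tlet x t body) c.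
Proof. intros Ht Hb. destruct (lam_spec Q body r x) as [v [Hv Hv']].
  econstructor; eauto. apply Hv'; auto. Qed.

Lemma ev_lamap r x body a c : ev Q (upd r x a) body c -> exists v, ev Q r (lam Q x body) v /\ ap Q v a c.
Proof. intros Hb. destruct (lam_spec Q body r x) as [v [Hv Hv']]. exists v; split; auto.
  apply Hv'; auto. Qed.

End Derived.

Section Monad.
Context {A : Type} (Q : pca_str A) (f : A -> option A).

Definition done c z y := exists p, pairv Q c z p /\ pairv Q (pT Q) p y.
Definition query v y := pairv Q (pF Q) v y.
Definition Comp m L c :=
  (forall s z, is_code Q (L++s) z -> exists z' y, is_code Q s z' /\ ap Q m z y /\ done c z' y) /\
  (forall i u, nth_error L i = Some u -> exists v z y, is_code Q (firstn i L) z /\ ap Q m z y /\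
      query v y /\ f v = Some u).

Definition bodyRet : tm A := pairT Q (C (pT Q)) (pairT Q (V 0) (V 1)).
Definition bodyBind : tm A := tlet Q 3 (Ap (V 0) (V 2))
  (tif Q (p0T Q (V 3)) (Ap (Ap (V 1) (p0T Q (p1T Q (V 3)))) (p1T Q (p1T Q (V 3)))) (V 3)).
Definition bodyAsk : tm A := tif Q (p0T Q (V 1)) (pairT Q (C (pF Q)) (V 0))
  (pairT Q (C (pT Q)) (pairT Q (p0T Q (p1T Q (V 1))) (p1T Q (p1T Q (V 1))))).

Definition ret_spec rq := forall c, exists m, ap Q rq c m /\ Comp m [] c.
Definition bind_spec bq := forall m k, exists v, (exists w, ap Q bq m w /\ ap Q w k v) /\
  (forall L1 c1 m2 L2 c2, Comp m L1 c1 -> ap Q k c1 m2 -> Comp m2 L2 c2 -> Comp v (L1++L2) c2).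
Definition ask_spec aq := forall v, exists m, ap Q aq v m /\ forall u, f v = Some u -> Comp m [u] u.

Lemma ret_ex : exists rq, ret_spec rq.
Proof. destruct (clos2 Q bodyRet) as [F HF]. exists F. intros c.
  destruct (HF c) as [w [Hw Hw']]. exists w. split; auto. split.
  - intros s z Hz. simpl in Hz. exists z.
    destruct (pairv_ex Q c z) as [p Hp]. destruct (pairv_ex Q (pT Q) p) as [y Hy].
    exists y. repeat split; auto.
    + apply Hw'. unfold bodyRet. eapply ev_pair'; [constructor| |eauto].
      eapply ev_pair'; [constructor|constructor|]. cbn. eauto.
    + exists p; auto.
  - intros i u H. destruct i; discriminate.
Qed.

Lemma bind_ex : exists bq, bind_spec bq.
Proof. destruct (clos3 Q bodyBind) as [F HF]. exists F. intros m k.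
  destruct (HF m) as [w [Hw Hw']]. destruct (Hw' k) as [w2 [Hw2 Hw2']].
  exists w2. split; eauto.
  intros L1 c1 m2 L2 c2 [H1a H1b] Hk [H2a H2b]. split.
  - intros s z Hz. rewrite <- app_assoc in Hz.
    destruct (H1a _ _ Hz) as [z1 [y1 [Hz1 [Hy1 [p1 [Hp1 Hd1]]]]]].
    destruct (H2a _ _ Hz1) as [z2 [y2 [Hz2 [Hy2 Hd2]]]].
    exists z2, y2. repeat split; auto. apply Hw2'. unfold bodyBind.
    eapply ev_let.
    + econstructor; [constructor|constructor|]. cbn. eauto.
    + apply ev_ifT; [reflexivity| |].
      * eapply ev_p0; [constructor|]. cbn. eauto.
      * econstructor; [econstructor; [constructor| |]| |].
        -- eapply ev_p0; [eapply ev_p1; [constructor|cbn; eauto]|eauto].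
        -- cbn. eauto.
        -- eapply ev_p1; [eapply ev_p1; [constructor|cbn; eauto]|eauto].
        -- auto.
  - intros i u Hi. destruct (Nat.lt_ge_cases i (length L1)) as [Hl|Hl].
    + rewrite nth_error_app1 in Hi by auto.
      destruct (H1b _ _ Hi) as [v [z [y [Hz [Hy [Hq Hf]]]]]].
      exists v, z, y. rewrite firstn_app.
      replace (i - length L1) with 0 by lia. simpl. rewrite app_nil_r. repeat split; auto.
      apply Hw2'. unfold bodyBind. eapply ev_let.
      * econstructor; [constructor|constructor|]. cbn. eauto.
      * apply ev_ifF; [reflexivity| |].
        -- eapply ev_p0; [constructor|]. cbn. eauto.
        -- cbn. constructor.
    + rewrite nth_error_app2 in Hi by auto.
      destruct (H2b _ _ Hi) as [v [z1 [y [Hz1 [Hy [Hq Hf]]]]]].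
      destruct (code_ex Q (L1 ++ firstn (i - length L1) L2)) as [z Hz].
      destruct (H1a _ _ Hz) as [z1' [y1 [Hz1' [Hy1 [p1 [Hp1 Hd1]]]]]].
      pose proof (code_fun Q _ _ _ Hz1 Hz1'); subst z1'.
      exists v, z, y. rewrite firstn_app. rewrite firstn_all2 by auto. repeat split; auto.
      apply Hw2'. unfold bodyBind. eapply ev_let.
      * econstructor; [constructor|constructor|]. cbn. eauto.
      * apply ev_ifT; [reflexivity| |].
        -- eapply ev_p0; [constructor|]. cbn. eauto.
        -- econstructor; [econstructor; [constructor| |]| |].
           ++ eapply ev_p0; [eapply ev_p1; [constructor|cbn; eauto]|eauto].
           ++ cbn. eauto.
           ++ eapply ev_p1; [eapply ev_p1; [constructor|cbn; eauto]|eauto].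
           ++ auto.
Qed.

Lemma ask_ex : exists aq, ask_spec aq.
Proof. destruct (clos2 Q bodyAsk) as [F HF]. exists F. intros v.
  destruct (HF v) as [w [Hw Hw']]. exists w. split; auto. intros u Hf. split.
  - intros s z Hz. simpl in Hz. apply code_cons_inv in Hz as [z0 [w0 [Hz0 [Hw0 Hy]]]].
    destruct (pairv_ex Q (pT Q) w0) as [y Hy']. exists z0, y. repeat split; auto.
    + apply Hw'. unfold bodyAsk. apply ev_ifF; [reflexivity| |].
      * eapply ev_p0; [constructor|]. cbn. eauto.
      * eapply ev_pair'; [constructor| |eauto].
        eapply ev_pair'; [| |eauto].
        -- eapply ev_p0; [eapply ev_p1; [constructor|cbn; eauto]|eauto].
        -- eapply ev_p1; [eapply ev_p1; [constructor|cbn; eauto]|eauto].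
    + exists w0; auto.
  - intros i u' Hi. destruct i; [|destruct i; discriminate]. simpl in Hi. injection Hi as <-.
    destruct (code_ex Q []) as [z Hz]. destruct (pairv_ex Q (pF Q) v) as [y Hy].
    exists v, z, y. simpl. repeat split; auto. apply Hw'. unfold bodyAsk.
    apply ev_ifT; [reflexivity| |].
    + inversion Hz; subst. eapply ev_p0; [constructor|]. cbn. eauto.
    + eapply ev_pair'; [constructor|constructor|]. cbn. eauto.
Qed.

End Monad.

Lemma skipn_nth {X} (l : list X) j d : j < length l -> skipn j l = nth j l d :: skipn (S j) l.
Proof. revert j; induction l; intros j H; simpl in *; [lia|]. destruct j; auto.
  simpl. apply IHl. lia. Qed.
Lemma firstn_S_nth {X} (l : list X) j d : j < length l -> firstn (S j) l = firstn j l ++ [nth j l d].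
Proof. revert j; induction l; intros j H; simpl in *; [lia|]. destruct j; auto.
  simpl. f_equal. apply IHl. lia. Qed.

Section Sim.
Context {A : Type} (P Q : pca_str A) (f g : A -> option A).
Context (rq bq aq e gq nilP : A) (Hrq : ret_spec Q f rq) (Hbq : bind_spec Q f bq) (Haq : ask_spec Q f aq)
  (He : forall a, exists e1, ap Q e a e1 /\ forall b c, ap P a b c -> ap Q e1 b c)
  (Hgq : forall v u, g v = Some u -> ap Q gq v u) (HnilP : is_code P [] nilP).

Definition retT (t : tm A) := Ap (C rq) t.
Definition bindT (t k : tm A) := Ap (Ap (C bq) t) k.
Definition askT (t : tm A) := Ap (C aq) t.
Definition eAp (t u : tm A) := Ap (Ap (C e) t) u.

Definition CompE r t L c := exists m, ev Q r t m /\ Comp Q f m L c.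

Lemma ev_eAp r t u a b c : ev Q r t a -> ev Q r u b -> ap P a b c -> ev Q r (eAp t u) c.
Proof. intros Ht Hu Hc. destruct (He a) as [e1 [H1 H2]].
  econstructor; [econstructor; [constructor|eauto|eauto]|eauto|eauto]. Qed.

Lemma cE_ret r t c : ev Q r t c -> CompE r (retT t) [] c.
Proof. intros Ht. destruct (Hrq c) as [m [Hm Hc]]. exists m; split; auto.
  econstructor; [constructor|eauto|eauto]. Qed.

Lemma cE_ask r t v u : ev Q r t v -> f v = Some u -> CompE r (askT t) [u] u.
Proof. intros Ht Hf. destruct (Haq v) as [m [Hm Hc]]. exists m; split; auto.
  econstructor; [constructor|eauto|eauto]. Qed.

Lemma cE_bind r t1 tk L1 c1 k m2 L2 c2 : CompE r t1 L1 c1 -> ev Q r tk k -> ap Q k c1 m2 ->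
  Comp Q f m2 L2 c2 -> CompE r (bindT t1 tk) (L1++L2) c2.
Proof. intros [m [Hm Hc]] Hk Hkc Hc2. destruct (Hbq m k) as [v [[w [Hw Hwv]] Hv]].
  exists v. split; [|eapply Hv; eauto].
  econstructor; [econstructor; [constructor|eauto|eauto]|eauto|eauto]. Qed.

Lemma cE_bindl r t1 x body L1 c1 L2 c2 : CompE r t1 L1 c1 -> CompE (upd r x c1) body L2 c2 ->
  CompE r (bindT t1 (lam Q x body)) (L1++L2) c2.
Proof. intros H1 [m2 [Hm2 Hc2]]. destruct (ev_lamap Q _ _ _ _ _ Hm2) as [v [Hv Hva]].
  eapply cE_bind; eauto. Qed.

Lemma cE_ifT r b t1 t2 L c : occ 99 t1 = false -> ev Q r b (pT Q) -> CompE r t1 L c -> CompE r (tif Q b t1 t2) L c.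
Proof. intros Ho Hb [m [Hm Hc]]. exists m; split; auto. apply ev_ifT; auto. Qed.
Lemma cE_ifF r b t1 t2 L c : occ 99 t2 = false -> ev Q r b (pF Q) -> CompE r t2 L c -> CompE r (tif Q b t1 t2) L c.
Proof. intros Ho Hb [m [Hm Hc]]. exists m; split; auto. apply ev_ifF; auto. Qed.

Lemma cE_let r x t body a L c : ev Q r t a -> CompE (upd r x a) body L c -> CompE r (tlet Q x t body) L c.
Proof. intros Ht [m [Hm Hc]]. exists m; split; auto. eapply ev_let; eauto. Qed.

Definition consP (u z : tm A) := eAp (eAp (C (pp P)) (C (pF P))) (eAp (eAp (C (pp P)) u) z).

Lemma ev_consP r tu tz u z s : ev Q r tu u -> ev Q r tz z -> is_code P s z ->
  exists Z, ev Q r (consP tu tz) Z /\ is_code P (u::s) Z.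
Proof. intros Hu Hz Hs. destruct (pairv_ex P u z) as [w [q [Hq Hw]]].
  destruct (pairv_ex P (pF P) w) as [y [q2 [Hq2 Hy]]].
  exists y. split.
  - unfold consP. eapply ev_eAp; [eapply ev_eAp; [constructor|constructor|eauto]| |eauto].
    eapply ev_eAp; [eapply ev_eAp; [constructor|eauto|eauto]|eauto|eauto].
  - econstructor; eauto; eexists; eauto.
Qed.

Definition bodyLF : tm A := tlet Q 3 (eAp (V 1) (Ap (V 2) (C nilP)))
 (tif Q (eAp (eAp (eAp (C (pp0 P)) (V 3)) (C (pT Q))) (C (pF Q)))
    (retT (eAp (C (pp1 P)) (V 3)))
    (bindT (askT (eAp (C (pp1 P)) (V 3)))
       (lam Q 4 (Ap (Ap (V 0) (V 1)) (lam Q 5 (Ap (V 2) (consP (V 4) (V 5)))))))).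

Section LF.
Context (LF : A) (HLF : forall a, exists w, ap Q LF a w /\
  forall b m, ap Q w b m <-> ev Q (upd (upd (upd (r0 Q) 0 LF) 1 a) 2 b) bodyLF m).

Lemma LF_correct a x us c : dialogue P f a x us ->
  (exists X W, is_code P (x::us) X /\ pairv P (pT P) c W /\ ap P a X W) ->
  forall j, j <= length us -> forall k,
  (forall s z, is_code P s z -> exists Z, ap Q k z Z /\ is_code P (x :: firstn j us ++ s) Z) ->
  exists w m, ap Q LF a w /\ ap Q w k m /\ Comp Q f m (skipn j us) c.
Proof.
  intros Hd [X [W [HX [HW HaX]]]] j Hj.
  remember (length us - j) as n. revert j Hj Heqn.
  induction n as [|n IH]; intros j Hj Hn k Hk; destruct (HLF a) as [w [Hw Hw']].
  - assert (j = length us) by lia. subst j.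
    rewrite firstn_all in Hk. rewrite skipn_all. destruct (Hk _ _ HnilP) as [Z [HkZ HZ]].
    rewrite app_nil_r in HZ. pose proof (code_fun P _ _ _ HX HZ); subst Z.
    assert (HC : CompE (upd (upd (upd (r0 Q) 0 LF) 1 a) 2 k) bodyLF [] c).
    { unfold bodyLF. eapply cE_let.
      - eapply ev_eAp; [constructor| |eauto]. econstructor; [constructor|constructor|]. cbn. eauto.
      - destruct (T_sel P (pT Q) (pF Q)) as [t [Ht1 Ht2]].
        apply cE_ifT; [reflexivity| |].
        + eapply ev_eAp; [eapply ev_eAp; [eapply ev_eAp; [constructor|constructor|]|constructor|eauto]|constructor|eauto].
          cbn. eapply pairv_p0; eauto.
        + apply cE_ret. eapply ev_eAp; [constructor|constructor|]. cbn. eapply pairv_p1; eauto. }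
    destruct HC as [m [Hm Hc]]. exists w, m. repeat split; auto; try apply Hw'; auto; apply Hc.
  - assert (Hjl : j < length us) by lia.
    destruct (Hd j Hjl) as [v [Xj [Wj [HXj [HWj [HaXj Hfv]]]]]].
    destruct (Hk _ _ HnilP) as [Z [HkZ HZ]].
    rewrite app_nil_r in HZ. pose proof (code_fun P _ _ _ HXj HZ); subst Z.
    set (u := nth j us x) in *.
    assert (HC : CompE (upd (upd (upd (r0 Q) 0 LF) 1 a) 2 k) bodyLF (skipn j us) c).
    { rewrite (skipn_nth us j x Hjl). change (u :: skipn (S j) us) with ([u] ++ skipn (S j) us).
      unfold bodyLF. eapply cE_let.
      - eapply ev_eAp; [constructor| |eauto]. econstructor; [constructor|constructor|]. cbn. eauto.
      - destruct (F_sel P (pT Q) (pF Q)) as [t [Ht1 Ht2]].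
        apply cE_ifF; [reflexivity| |].
        + eapply ev_eAp; [eapply ev_eAp; [eapply ev_eAp; [constructor|constructor|]|constructor|eauto]|constructor|eauto].
          cbn. eapply pairv_p0; eauto.
        + apply (cE_bindl _ _ _ _ [u] u (skipn (S j) us) c).
          * eapply cE_ask; [|eauto]. eapply ev_eAp; [constructor|constructor|]. cbn. eapply pairv_p1; eauto.
          * set (r1 := upd (upd (upd (upd (upd (r0 Q) 0 LF) 1 a) 2 k) 3 Wj) 4 u).
            destruct (lam_spec Q (Ap (V 2) (consP (V 4) (V 5))) r1 5) as [k' [Hk'ev Hk'sp]].
            assert (Hk' : forall s z, is_code P s z -> exists Z, ap Q k' z Z /\ is_code P (x :: firstn (S j) us ++ s) Z).
            { intros s z Hs. destruct (ev_consP (upd r1 5 z) (V 4) (V 5) u z s) as [Zc [HZc HZc']]; auto.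
              constructor. constructor.
              destruct (Hk _ _ HZc') as [Z [HkZ' HZ2]]. exists Z. split.
              - apply Hk'sp. econstructor; [constructor|eauto|]. cbn. auto.
              - rewrite (firstn_S_nth us j x Hjl). rewrite <- app_assoc. exact HZ2. }
            destruct (IH (S j) ltac:(lia) ltac:(lia) k' Hk') as [w' [m' [Hw1 [Hw2 Hm']]]].
            pose proof (apf Q _ _ _ _ Hw Hw1); subst w'.
            exists m'. split; auto.
            econstructor; [econstructor; [constructor|constructor|]|eauto|eauto]. cbn. auto. }
    destruct HC as [m [Hm Hc]]. exists w, m. repeat split; auto; try apply Hw'; auto; apply Hc.
Qed.
End LF.

Definition bodyAPF (LF : A) : tm A := Ap (Ap (C LF) (V 0)) (lam Q 2 (consP (V 1) (V 2))).

Lemma APF_ex : exists apfv, forall a, exists w, ap Q apfv a w /\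
  forall x c, rel_ap P f a x c -> exists m L, ap Q w x m /\ Comp Q f m L c.
Proof. destruct (rec2 Q bodyLF) as [LF HLF]. destruct (clos2 Q (bodyAPF LF)) as [F HF].
  exists F. intros a. destruct (HF a) as [w [Hw Hw']]. exists w; split; auto.
  intros x c [us [Hd Hfin]].
  set (r1 := upd (upd (r0 Q) 0 a) 1 x).
  destruct (lam_spec Q (consP (V 1) (V 2)) r1 2) as [k0 [Hk0 Hk0']].
  destruct (LF_correct LF HLF a x us c Hd Hfin 0 ltac:(lia) k0) as [w1 [m [Hw1 [Hm Hc]]]].
  { intros s z Hs. destruct (ev_consP (upd r1 2 z) (V 1) (V 2) x z s) as [Z [HZ HZ']]; auto.
    constructor. constructor. exists Z; split; auto. apply Hk0'; auto. }
  exists m, us. split; auto. apply Hw'. unfold bodyAPF.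
  econstructor; [econstructor; [constructor|constructor|eauto]|eauto|eauto].
Qed.

Definition CompX r t c := exists L, CompE r t L c.

Lemma evV' r n c : c = r n -> ev Q r (V n) c.
Proof. intros ->; constructor. Qed.

Lemma cX_bindl r t1 x body c1 c2 : CompX r t1 c1 -> CompX (upd r x c1) body c2 ->
  CompX r (bindT t1 (lam Q x body)) c2.
Proof. intros [L1 H1] [L2 H2]. exists (L1++L2). eapply cE_bindl; eauto. Qed.
Lemma cX_bind r t1 tk c1 k m2 L2 c2 : CompX r t1 c1 -> ev Q r tk k -> ap Q k c1 m2 ->
  Comp Q f m2 L2 c2 -> CompX r (bindT t1 tk) c2.
Proof. intros [L1 H1] Hk Hkc Hc. exists (L1++L2). eapply cE_bind; eauto. Qed.
Lemma cX_ifT r b t1 t2 c : occ 99 t1 = false -> ev Q r b (pT Q) -> CompX r t1 c -> CompX r (tif Q b t1 t2) c.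
Proof. intros Ho Hb [L H]. exists L. apply cE_ifT; auto. Qed.
Lemma cX_ifF r b t1 t2 c : occ 99 t2 = false -> ev Q r b (pF Q) -> CompX r t2 c -> CompX r (tif Q b t1 t2) c.
Proof. intros Ho Hb [L H]. exists L. apply cE_ifF; auto. Qed.
Lemma cX_ev r t m L c : ev Q r t m -> Comp Q f m L c -> CompX r t c.
Proof. intros; exists L, m; auto. Qed.

Section LG.
Context (Pf : pca_str A) (apfv : A) (Happf : forall a, exists w, ap Q apfv a w /\
  forall x c, ap Pf a x c -> exists m L, ap Q w x m /\ Comp Q f m L c).

Definition apfT (t u : tm A) := Ap (Ap (C apfv) t) u.

Lemma cX_apf r t u a x c : ev Q r t a -> ev Q r u x -> ap Pf a x c -> CompX r (apfT t u) c.
Proof. intros Ht Hu Hc. destruct (Happf a) as [w [Hw Hw']]. destruct (Hw' _ _ Hc) as [m [L [Hm Hmc]]].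
  exists L, m. split; auto. econstructor; [econstructor; [constructor|eauto|eauto]|eauto|eauto]. Qed.

Definition nilFT : tm A := bindT (apfT (C (pp Pf)) (C (pT Pf))) (lam Q 50 (apfT (V 50) (C (pT Pf)))).

Lemma cX_nilF r : exists z, CompX r nilFT z /\ is_code Pf [] z.
Proof. destruct (pairv_ex Pf (pT Pf) (pT Pf)) as [z [q [Hq Hz]]]. exists z. split.
  - eapply cX_bindl; [eapply cX_apf; [constructor|constructor|eauto]|].
    eapply cX_apf; [constructor|constructor|]. cbn. eauto.
  - constructor. exists q; auto. Qed.

Definition bodyCONSF : tm A := bindT (apfT (C (pp Pf)) (V 0)) (lam Q 2 (bindT (apfT (V 2) (V 1))
  (lam Q 3 (bindT (apfT (C (pp Pf)) (C (pF Pf))) (lam Q 4 (apfT (V 4) (V 3))))))).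

Section CF.
Context (CONSF : A) (HCF : forall a, exists w, ap Q CONSF a w /\
  forall b m, ap Q w b m <-> ev Q (upd (upd (r0 Q) 0 a) 1 b) bodyCONSF m).

Lemma consF_spec u : exists w, ap Q CONSF u w /\ forall s z, is_code Pf s z ->
  exists m L Z, ap Q w z m /\ Comp Q f m L Z /\ is_code Pf (u::s) Z.
Proof. destruct (HCF u) as [w [Hw Hw']]. exists w; split; auto. intros s z Hs.
  destruct (pairv_ex Pf u z) as [p [q1 [Hq1 Hp]]].
  destruct (pairv_ex Pf (pF Pf) p) as [Z [q2 [Hq2 HZ]]].
  assert (HX : CompX (upd (upd (r0 Q) 0 u) 1 z) bodyCONSF Z).
  { unfold bodyCONSF.
    eapply cX_bindl; [eapply cX_apf; [constructor|constructor|cbn; eauto]|].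
    eapply cX_bindl; [eapply cX_apf; [constructor|constructor|cbn; eauto]|].
    eapply cX_bindl; [eapply cX_apf; [constructor|constructor|cbn; eauto]|].
    eapply cX_apf; [constructor|constructor|cbn; eauto]. }
  destruct HX as [L [m [Hm Hc]]]. exists m, L, Z. split; [|split]; auto.
  - apply Hw'; auto.
  - econstructor; eauto; eexists; eauto.
Qed.

Definition bodyLG : tm A :=
 bindT nilFT (lam Q 3 (bindT (Ap (V 2) (V 3)) (lam Q 4 (bindT (apfT (V 1) (V 4)) (lam Q 5
 (bindT (apfT (C (pp0 Pf)) (V 5)) (lam Q 6 (bindT (apfT (V 6) (C (pT Q))) (lam Q 7
 (bindT (apfT (V 7) (C (pF Q))) (lam Q 8
  (tif Q (V 8) (apfT (C (pp1 Pf)) (V 5))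
     (bindT (apfT (C (pp1 Pf)) (V 5)) (lam Q 9 (Ap (Ap (V 0) (V 1))
        (lam Q 10 (bindT (Ap (Ap (C CONSF) (Ap (C gq) (V 9))) (V 10)) (V 2)))))))))))))))))).

Section LGc.
Context (LG : A) (HLG : forall a, exists w, ap Q LG a w /\
  forall b m, ap Q w b m <-> ev Q (upd (upd (upd (r0 Q) 0 LG) 1 a) 2 b) bodyLG m).

Lemma LG_correct a b ws c : dialogue Pf g a b ws ->
  (exists X W, is_code Pf (b::ws) X /\ pairv Pf (pT Pf) c W /\ ap Pf a X W) ->
  forall j, j <= length ws -> forall k,
  (forall s z, is_code Pf s z -> exists m L Z, ap Q k z m /\ Comp Q f m L Z /\
     is_code Pf (b :: firstn j ws ++ s) Z) ->
  exists w m L, ap Q LG a w /\ ap Q w k m /\ Comp Q f m L c.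
Proof.
  intros Hd [X [W [HX [HW HaX]]]] j Hj.
  remember (length ws - j) as n. revert j Hj Heqn.
  induction n as [|n IH]; intros j Hj Hn k Hk; destruct (HLG a) as [w [Hw Hw']].
  - assert (j = length ws) by lia. subst j.
    rewrite firstn_all in Hk.
    assert (HC : CompX (upd (upd (upd (r0 Q) 0 LG) 1 a) 2 k) bodyLG c).
    { destruct (cX_nilF (upd (upd (upd (r0 Q) 0 LG) 1 a) 2 k)) as [n0 [Hn0 Hn0c]].
      destruct (Hk _ _ Hn0c) as [m1 [L1 [Z [Hkm [Hm1 HZ]]]]].
      rewrite app_nil_r in HZ. pose proof (code_fun Pf _ _ _ HX HZ); subst Z.
      destruct (T_sel Pf (pT Q) (pF Q)) as [t [Ht1 Ht2]].
      unfold bodyLG. eapply cX_bindl; [exact Hn0|].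
      eapply cX_bindl; [eapply cX_ev; [|exact Hm1]; econstructor; [constructor|constructor|cbn; exact Hkm]|].
      eapply cX_bindl; [eapply cX_apf; [constructor|constructor|cbn; exact HaX]|].
      eapply cX_bindl; [eapply cX_apf; [constructor|constructor|cbn; eapply pairv_p0; exact HW]|].
      eapply cX_bindl; [eapply cX_apf; [constructor|constructor|cbn; exact Ht1]|].
      eapply cX_bindl; [eapply cX_apf; [constructor|constructor|cbn; exact Ht2]|].
      apply cX_ifT; [reflexivity|apply evV'; reflexivity|].
      eapply cX_apf; [constructor|constructor|cbn; eapply pairv_p1; exact HW]. }
    destruct HC as [L [m [Hm Hc]]]. exists w, m, L. repeat split; auto; try apply Hw'; auto; apply Hc.
  - assert (Hjl : j < length ws) by lia.
    destruct (Hd j Hjl) as [v [Xj [Wj [HXj [HWj [HaXj Hgv]]]]]].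
    set (u := nth j ws b) in *.
    assert (HC : CompX (upd (upd (upd (r0 Q) 0 LG) 1 a) 2 k) bodyLG c).
    { destruct (cX_nilF (upd (upd (upd (r0 Q) 0 LG) 1 a) 2 k)) as [n0 [Hn0 Hn0c]].
      destruct (Hk _ _ Hn0c) as [m1 [L1 [Z [Hkm [Hm1 HZ]]]]].
      rewrite app_nil_r in HZ. pose proof (code_fun Pf _ _ _ HXj HZ); subst Z.
      destruct (F_sel Pf (pT Q) (pF Q)) as [t [Ht1 Ht2]].
      unfold bodyLG. eapply cX_bindl; [exact Hn0|].
      eapply cX_bindl; [eapply cX_ev; [|exact Hm1]; econstructor; [constructor|constructor|cbn; exact Hkm]|].
      eapply cX_bindl; [eapply cX_apf; [constructor|constructor|cbn; exact HaXj]|].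
      eapply cX_bindl; [eapply cX_apf; [constructor|constructor|cbn; eapply pairv_p0; exact HWj]|].
      eapply cX_bindl; [eapply cX_apf; [constructor|constructor|cbn; exact Ht1]|].
      eapply cX_bindl; [eapply cX_apf; [constructor|constructor|cbn; exact Ht2]|].
      apply cX_ifF; [reflexivity|apply evV'; reflexivity|].
      eapply cX_bindl; [eapply cX_apf; [constructor|constructor|cbn; eapply pairv_p1; exact HWj]|].
      set (r1 := upd (upd (upd (upd (upd (upd (upd (upd (upd (upd (r0 Q) 0 LG) 1 a) 2 k) 3 n0) 4 Xj) 5 Wj) 6 (pF Pf)) 7 t) 8 (pF Q)) 9 v).
      destruct (lam_spec Q (bindT (Ap (Ap (C CONSF) (Ap (C gq) (V 9))) (V 10)) (V 2)) r1 10) as [k' [Hk'ev Hk'sp]].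
      assert (Hk' : forall s z, is_code Pf s z -> exists m L Z, ap Q k' z m /\ Comp Q f m L Z /\
                 is_code Pf (b :: firstn (S j) ws ++ s) Z).
      { intros s z Hs. destruct (consF_spec u) as [wu [Hwu Hwu']].
        destruct (Hwu' _ _ Hs) as [mc [Lc [Zc [Hmc [Hcc HZc]]]]].
        destruct (Hk _ _ HZc) as [m2 [L2 [Z2 [Hkm2 [Hm2 HZ2]]]]].
        assert (HX2 : CompX (upd r1 10 z) (bindT (Ap (Ap (C CONSF) (Ap (C gq) (V 9))) (V 10)) (V 2)) Z2).
        { eapply cX_bind; [|apply evV'; reflexivity|cbn; exact Hkm2|exact Hm2].
          eapply cX_ev; [|exact Hcc].
          econstructor; [econstructor; [constructor| |]|constructor|].
          - econstructor; [constructor|apply evV'; reflexivity|]. cbn. apply Hgq. exact Hgv.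
          - exact Hwu.
          - cbn. exact Hmc. }
        destruct HX2 as [L3 [m3 [Hm3 Hc3]]]. exists m3, L3, Z2. split; [|split]; auto.
        - apply Hk'sp; auto.
        - rewrite (firstn_S_nth ws j b Hjl). rewrite <- app_assoc. exact HZ2. }
      destruct (IH (S j) ltac:(lia) ltac:(lia) k' Hk') as [w' [m' [L' [Hw1 [Hw2 Hm']]]]].
      pose proof (apf Q _ _ _ _ Hw Hw1); subst w'.
      eapply cX_ev; [|exact Hm'].
      econstructor; [econstructor; [constructor|constructor|]|eauto|eauto]. cbn. auto. }
    destruct HC as [L [m [Hm Hc]]]. exists w, m, L. repeat split; auto; try apply Hw'; auto; apply Hc.
Qed.


Definition bodyK0 : tm A := Ap (Ap (C CONSF) (V 0)) (V 1).
Section Top.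
Context (K0 : A) (HK0 : forall a, exists w, ap Q K0 a w /\
  forall b m, ap Q w b m <-> ev Q (upd (upd (r0 Q) 0 a) 1 b) bodyK0 m).
Definition bodyR1 : tm A := tlet Q 2 (Ap (Ap (Ap (C LG) (V 0)) (Ap (C K0) (p0T Q (p1T Q (V 1)))))
   (p1T Q (p1T Q (V 1))))
  (tif Q (p0T Q (V 2)) (pairT Q (C (pT Q)) (p0T Q (p1T Q (V 2)))) (V 2)).
Context (R1 : A) (HR1 : forall a, exists w, ap Q R1 a w /\
  forall b m, ap Q w b m <-> ev Q (upd (upd (r0 Q) 0 a) 1 b) bodyR1 m).
Definition bodyR : tm A := pairT Q (C (pT Q)) (Ap (C R1) (p0T Q (p1T Q (V 0)))).
Context (R : A) (HR : forall a m, ap Q R a m <-> ev Q (upd (r0 Q) 0 a) bodyR m).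

Lemma sim_main a b c : rel_ap Pf g a b c -> exists r1, rel_ap Q f R a r1 /\ rel_ap Q f r1 b c.
Proof.
  intros [ws [Hd Hfin]]. destruct (HR1 a) as [w1 [Hw1 Hw1']]. exists w1. split.
  - exists []. split. { intros i Hi. simpl in Hi. lia. }
    destruct (code_ex Q [a]) as [X HX]. destruct (pairv_ex Q (pT Q) w1) as [W HW].
    exists X, W. split; [|split]; auto. apply HR. unfold bodyR.
    apply code_cons_inv in HX as [z0 [w0 [Hz0 [Hw0 HX0]]]].
    eapply ev_pair'; [constructor| |exact HW].
    econstructor; [constructor| |exact Hw1].
    eapply ev_p0; [eapply ev_p1; [constructor|cbn; exact HX0]|exact Hw0].
  - destruct (HK0 b) as [k0 [Hk0 Hk0']].
    destruct (consF_spec b) as [wb [Hwb Hwb']].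
    destruct (LG_correct a b ws c Hd Hfin 0 ltac:(lia) k0) as [wl [m [L [Hwl [Hm Hc]]]]].
    { intros s z Hs. destruct (Hwb' _ _ Hs) as [m0 [L0 [Z [Hm0 [Hc0 HZ]]]]].
      exists m0, L0, Z. split; [|split]; auto. apply Hk0'. unfold bodyK0.
      econstructor; [econstructor; [constructor|constructor|exact Hwb]|constructor|exact Hm0]. }
    destruct Hc as [Hc1 Hc2].
    exists L. split.
    + intros i Hi. assert (Hn : nth_error L i = Some (nth i L b)) by (apply nth_error_nth'; auto).
      destruct (Hc2 _ _ Hn) as [v [z [y [Hz [Hy [Hq Hf]]]]]].
      destruct (code_ex Q (b :: firstn i L)) as [Xi HXi].
      pose proof HXi as HXi'.
      apply code_cons_inv in HXi' as [z' [w' [Hz' [Hw' HX']]]].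
      pose proof (code_fun Q _ _ _ Hz Hz'); subst z'.
      exists v, Xi, y. split; [|split; [|split]]; auto.
      apply Hw1'. unfold bodyR1. eapply ev_let.
      * econstructor; [econstructor; [econstructor; [constructor|constructor|exact Hwl]| |]| |].
        -- econstructor; [constructor| |exact Hk0].
           eapply ev_p0; [eapply ev_p1; [constructor|cbn; exact HX']|exact Hw'].
        -- exact Hm.
        -- eapply ev_p1; [eapply ev_p1; [constructor|cbn; exact HX']|exact Hw'].
        -- exact Hy.
      * apply ev_ifF; [reflexivity| |].
        -- eapply ev_p0; [constructor|cbn; exact Hq].
        -- apply evV'; reflexivity.
    + destruct (code_ex Q (b :: L)) as [X HX].
      pose proof HX as HX'.
      apply code_cons_inv in HX' as [z' [w' [Hz' [Hw' HX0]]]].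
      rewrite <- (app_nil_r L) in Hz'.
      destruct (Hc1 _ _ Hz') as [z'' [y [Hz'' [Hy [p [Hp Hdp]]]]]].
      destruct (pairv_ex Q (pT Q) c) as [W HW].
      exists X, W. split; [|split]; auto.
      apply Hw1'. unfold bodyR1. eapply ev_let.
      * econstructor; [econstructor; [econstructor; [constructor|constructor|exact Hwl]| |]| |].
        -- econstructor; [constructor| |exact Hk0].
           eapply ev_p0; [eapply ev_p1; [constructor|cbn; exact HX0]|exact Hw'].
        -- exact Hm.
        -- eapply ev_p1; [eapply ev_p1; [constructor|cbn; exact HX0]|exact Hw'].
        -- exact Hy.
      * apply ev_ifT; [reflexivity| |].
        -- eapply ev_p0; [constructor|cbn; exact Hdp].
        -- eapply ev_pair'; [constructor| |exact HW].
           eapply ev_p0; [eapply ev_p1; [constructor|cbn; exact Hdp]|exact Hp].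
Qed.

End Top.
End LGc.
End CF.
End LG.
End Sim.

Definition hdT {A} (P : pca_str A) (t : tm A) := p0T P (p1T P t).

Lemma e_ex {A} (P : pca_str A) g (Pg : pca_str A) (HPg : forall a b c, ap Pg a b c <-> rel_ap P g a b c) :
  exists e, forall a, exists e1, ap Pg e a e1 /\ forall b c, ap P a b c -> ap Pg e1 b c.
Proof.
  destruct (clos1 P (pairT P (C (pT P)) (lam P 1 (pairT P (C (pT P)) (Ap (hdT P (V 0)) (hdT P (V 1)))))))
    as [F HF].
  exists F. intros a. destruct (code_ex P [a]) as [X HX].
  destruct (lam_spec P (pairT P (C (pT P)) (Ap (hdT P (V 0)) (hdT P (V 1)))) (upd (r0 P) 0 X) 1)
    as [e1 [He1 He1']].
  exists e1. split.
  - apply HPg. exists []. split; [intros i Hi; simpl in Hi; lia|].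
    destruct (pairv_ex P (pT P) e1) as [W HW]. exists X, W. split; [|split]; auto.
    apply HF. eapply ev_pair'; [constructor|exact He1|exact HW].
  - intros b c Hc. apply HPg. exists []. split; [intros i Hi; simpl in Hi; lia|].
    destruct (code_ex P [b]) as [Y HY]. destruct (pairv_ex P (pT P) c) as [W HW].
    exists Y, W. split; [|split]; auto. apply He1'.
    apply code_cons_inv in HX as [z0 [w0 [Hz0 [Hw0 HX0]]]].
    apply code_cons_inv in HY as [z1 [w1 [Hz1 [Hw1 HY0]]]].
    eapply ev_pair'; [constructor| |exact HW].
    econstructor; [| |exact Hc].
    + eapply ev_p0; [eapply ev_p1; [constructor|cbn; exact HX0]|exact Hw0].
    + eapply ev_p0; [eapply ev_p1; [constructor|cbn; exact HY0]|exact Hw1].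
Qed.

Lemma gq_ex {A} (P : pca_str A) g (Pg : pca_str A) (HPg : forall a b c, ap Pg a b c <-> rel_ap P g a b c) :
  exists gq, forall v u, g v = Some u -> ap Pg gq v u.
Proof.
  destruct (clos1 P (tif P (p0T P (p1T P (p1T P (V 0)))) (pairT P (C (pF P)) (hdT P (V 0)))
     (pairT P (C (pT P)) (hdT P (p1T P (p1T P (V 0))))))) as [G HG].
  exists G. intros v u Hg. apply HPg. exists [u]. split.
  - intros i Hi. simpl in Hi. assert (i = 0) by lia. subst i. simpl.
    destruct (code_ex P [v]) as [X HX]. destruct (pairv_ex P (pF P) v) as [W HW].
    exists v, X, W. split; [|split; [|split]]; auto.
    apply HG. pose proof HX as HX'. apply code_cons_inv in HX' as [z0 [w0 [Hz0 [Hw0 HX0]]]].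
    inversion Hz0; subst.
    apply ev_ifT; [reflexivity| |].
    + eapply ev_p0; [eapply ev_p1; [eapply ev_p1; [constructor|cbn; exact HX0]|exact Hw0]|eauto].
    + eapply ev_pair'; [constructor| |exact HW].
      eapply ev_p0; [eapply ev_p1; [constructor|cbn; exact HX0]|exact Hw0].
  - destruct (code_ex P [v; u]) as [X HX]. destruct (pairv_ex P (pT P) u) as [W HW].
    exists X, W. split; [|split]; auto.
    apply HG. pose proof HX as HX'. apply code_cons_inv in HX' as [z0 [w0 [Hz0 [Hw0 HX0]]]].
    pose proof Hz0 as Hz0'. apply code_cons_inv in Hz0' as [z1 [w1 [Hz1 [Hw1 Hz00]]]].
    apply ev_ifF; [reflexivity| |].
    + eapply ev_p0; [eapply ev_p1; [eapply ev_p1; [constructor|cbn; exact HX0]|exact Hw0]|exact Hz00].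
    + eapply ev_pair'; [constructor| |exact HW].
      eapply ev_p0; [eapply ev_p1; [eapply ev_p1; [eapply ev_p1; [constructor|cbn; exact HX0]|exact Hw0]|exact Hz00]|exact Hw1].
Qed.

Lemma sim_all {A} (P : pca_str A) (f g : A -> option A) (Pf Pg : pca_str A)
    (HPf : forall a b c, ap Pf a b c <-> rel_ap P f a b c)
    (HPg : forall a b c, ap Pg a b c <-> rel_ap P g a b c) :
  exists r, forall a b c, rel_ap Pf g a b c -> exists r1, rel_ap Pg f r a r1 /\ rel_ap Pg f r1 b c.
Proof.
  destruct (e_ex P g Pg HPg) as [e He]. destruct (gq_ex P g Pg HPg) as [gq Hgq].
  destruct (ret_ex Pg f) as [rq Hrq]. destruct (bind_ex Pg f) as [bq Hbq].
  destruct (ask_ex Pg f) as [aq Haq]. destruct (code_ex P []) as [nilP HnilP].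
  destruct (APF_ex P Pg f rq bq aq e nilP Hrq Hbq Haq He HnilP) as [apfv Happf].
  assert (Happf' : forall a, exists w, ap Pg apfv a w /\
    forall x c, ap Pf a x c -> exists m L, ap Pg w x m /\ Comp Pg f m L c).
  { intros a. destruct (Happf a) as [w [Hw Hw']]. exists w; split; auto.
    intros x c Hc. apply Hw'. apply HPf; auto. }
  destruct (clos2 Pg (bodyCONSF Pg bq Pf apfv)) as [CONSF HCF].
  destruct (rec2 Pg (bodyLG Pg bq gq Pf apfv CONSF)) as [LG HLG].
  destruct (clos2 Pg (bodyK0 CONSF)) as [K0 HK0].
  destruct (clos2 Pg (bodyR1 Pg LG K0)) as [R1 HR1].
  destruct (clos1 Pg (bodyR Pg R1)) as [R HR].
  exists R. intros a b c H.
  eapply (sim_main Pg f g bq gq Hbq Hgq Pf apfv Happf' CONSF HCF LG HLG K0 HK0 R1 HR1 R HR); eauto.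
Qed.

Theorem mainTheorem4 (A : Type) (P : pca_str A) (f g : A -> option A)
    (Pf Pg : pca_str A)
    (HPf : forall a b c, ap Pf a b c <-> rel_ap P f a b c)
    (HPg : forall a b c, ap Pg a b c <-> rel_ap P g a b c) :
  pca_iso (rel_ap Pf g) (rel_ap Pg f).
Proof.
  exists (@eq A), (@eq A). split; [|split; [|split]].
  - split; [intros a; exists a; auto|].
    destruct (sim_all P f g Pf Pg HPf HPg) as [r Hr]. exists r.
    intros a a' c b b' H <- <-. destruct (Hr _ _ _ H) as [r1 [H1 H2]]. exists r1, c; auto.
  - split; [intros a; exists a; auto|].
    destruct (sim_all P g f Pg Pf HPg HPf) as [r Hr]. exists r.
    intros a a' c b b' H <- <-. destruct (Hr _ _ _ H) as [r1 [H1 H2]]. exists r1, c; auto.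
  - intros a x; split; [intros [b [-> ->]]; auto|intros ->; eauto].
  - intros a x; split; [intros [b [-> ->]]; auto|intros ->; eauto].
Qed.
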